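(* Let $n\ge d\ge 1$, let $\{\tilde Q(\theta):\theta\in\Theta\}$ be an orthogonal reduction parameterization of $O(d+1)$ to $e_1$, with blocks $\tilde Q(\theta)=\begin{pmatrix}\mu(\theta)&y(\theta)^*\\ x(\theta)&\tilde O(\theta)\end{pmatrix}$, and let $Q^{(k)}(\theta)$ be its embedding as defined below. Define $\Phi:\Theta^n\to\mathbb{R}^{(n+d)\times n}$ by $\Phi(\theta_1,\dots,\theta_n)=Q^{(n)}(\theta_n)\cdots Q^{(1)}(\theta_1)\begin{pmatrix}\mathbb{I}_n\\ 0_{d,n}\end{pmatrix}$, and identify a pair $(A,C)$ with its stack $\begin{pmatrix} C\\ A\end{pmatrix}$. Then $\Phi$ restricted to $\{(\theta_1,\dots,\theta_n):\mu(\theta_k)>0\ \forall k\}$ is a one-to-one correspondence onto the set of strict OTSON pairs, and $\Phi$ restricted to $\{(\theta_1,\dots,\theta_n):\mu(\theta_k)\neq 0\ \forall k\}$ is a one-to-one correspondence onto the set of unreduced OTSON pairs.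
   Context: ${}^*$ denotes transpose; $A$ is real $n\times n$, $C$ real $d\times n$, $Q=\begin{pmatrix} C\\ A\end{pmatrix}$. $(A,C)$ is OTSON if $A^*A=\mathbb{I}_n-C^*C$ and $Q_{i,j}=0$ for $j>i$; it is unreduced if $Q_{i,i}\ne 0$ for all $1\le i\le n$, and strict if $Q_{i,i}>0$ for all $1\le i\le n$. An orthogonal reduction parameterization (ORP) of $O(m)$ to $e_k$ is a family $\{\tilde Q(\theta):\theta\in\Theta\}$, $\Theta\subset\mathbb{R}^{m-1}$, of real orthogonal $m\times m$ matrices such that for every nonzero $h\in\mathbb{R}^m$ there is a unique $\theta(h)\in\Theta$ with $\tilde Q(\theta)^*h=\|h\|e_k$. Here $\mu\in\mathbb{R}$, $x,y\in\mathbb{R}^d$, $\tilde O\in\mathbb{R}^{d\times d}$, and the embedding is $Q^{(k)}(\theta)=\mathbb{I}_{k-1}\oplus\begin{pmatrix}\mu&0_{1,n-k}&y^*\\ 0_{n-k,1}&\mathbb{I}_{n-k}&0_{n-k,d}\\ x&0_{d,n-k}&\tilde O\end{pmatrix}$ (all blocks evaluated at $\theta$), an $(n+d)\times(n+d)$ matrix. *)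

(* Defs.v *)
From HB Require Import structures.
From mathcomp Require Import all_boot all_order all_algebra.
From mathcomp Require Import reals.
Set Implicit Arguments. Unset Strict Implicit. Unset Printing Implicit Defensive.
Import Order.TTheory GRing.Theory Num.Theory.
Local Open Scope ring_scope.

Section Defs.
Variable R : realType.

Definition vnorm m (h : 'cV[R]_m) : R := Num.sqrt (\sum_i h i 0 ^+ 2).

Definition orthogonal_mx m (M : 'M[R]_m) : Prop := M^T *m M = 1%:M.

(* Orthogonal reduction parameterization of O(m.+1) to e_k (k : 'I_m.+1,
   0-based); parameters live in Theta, a subset of R^m = R^{(m+1)-1}. *)
Definition ORP m (k : 'I_m.+1) (Theta : 'rV[R]_m -> Prop)
    (Qt : 'rV[R]_m -> 'M[R]_m.+1) : Prop :=
  (forall th, Theta th -> orthogonal_mx (Qt th)) /\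
  (forall h : 'cV[R]_m.+1, h != 0 ->
     exists! th, Theta th /\ (Qt th)^T *m h = vnorm h *: delta_mx k 0).

Definition mu d (Qt : 'rV[R]_d -> 'M[R]_d.+1) th : R := Qt th 0 0.

(* "Active" index map for the embedding Q^(k), k0 = k-1 (0-based):
   row/column k0 corresponds to block index 0 (mu),
   rows/columns n..n+d-1 correspond to block indices 1..d (x, y, O~). *)
Definition act_idx n d (k0 : 'I_n) (i : 'I_(d + n)) : option 'I_d.+1 :=
  if (i == k0 :> nat) then Some ord0
  else if (n <= i)%N then Some (inord (i - n).+1) else None.

(* Q^(k)(theta) = I_{k-1} (+) [[mu,0,y^*],[0,I_{n-k},0],[x,0,O~]],
   written entrywise, as an (n+d) x (n+d) matrix (indexed by 'I_(d+n)). *)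
Definition embedQ n d (Qt : 'rV[R]_d -> 'M[R]_d.+1) (k0 : 'I_n) th
    : 'M[R]_(d + n) :=
  \matrix_(i, j)
    match act_idx k0 i, act_idx k0 j with
    | Some a, Some b => Qt th a b
    | _, _ => (i == j)%:R
    end.

Definition topId n d : 'M[R]_(d + n, n) :=
  \matrix_(i, j) ((i : nat) == (j : nat))%:R.

Definition Phi n d (Qt : 'rV[R]_d -> 'M[R]_d.+1)
    (ths : {ffun 'I_n -> 'rV[R]_d}) : 'M[R]_(d + n, n) :=
  foldl (fun M k0 => embedQ Qt k0 (ths k0) *m M) 1%:M (enum 'I_n) *m topId n d.

Definition stack n d (A : 'M[R]_n) (C : 'M[R]_(d, n)) : 'M[R]_(d + n, n) :=
  col_mx C A.

Definition OTSON n d (A : 'M[R]_n) (C : 'M[R]_(d, n)) : Prop :=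
  A^T *m A = 1%:M - C^T *m C /\
  (forall (i : 'I_(d + n)) (j : 'I_n), (i < j)%N -> stack A C i j = 0).

Definition diagQ n d (A : 'M[R]_n) (C : 'M[R]_(d, n)) (i : 'I_n) : R :=
  stack A C (widen_ord (leq_addl d n) i) i.

Definition unreduced_OTSON n d (A : 'M[R]_n) (C : 'M[R]_(d, n)) : Prop :=
  OTSON A C /\ forall i, diagQ A C i != 0.

Definition strict_OTSON n d (A : 'M[R]_n) (C : 'M[R]_(d, n)) : Prop :=
  OTSON A C /\ forall i, 0 < diagQ A C i.

Definition bij_onto n d (Theta : 'rV[R]_d -> Prop)
    (Qt : 'rV[R]_d -> 'M[R]_d.+1) (P : R -> Prop)
    (S : 'M[R]_n -> 'M[R]_(d, n) -> Prop) : Prop :=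
  let Dom := fun ths : {ffun 'I_n -> 'rV[R]_d} =>
               forall k, Theta (ths k) /\ P (mu Qt (ths k)) in
  (forall ths, Dom ths ->
     exists A C, Phi Qt ths = stack A C /\ S A C) /\
  (forall ths ths', Dom ths -> Dom ths' ->
     Phi Qt ths = Phi Qt ths' -> ths = ths') /\
  (forall A C, S A C -> exists ths, Dom ths /\ Phi Qt ths = stack A C).

End Defs.

(* Main.v *)
Require Import Defs.
From HB Require Import structures.
From mathcomp Require Import all_boot all_order all_algebra.
From mathcomp Require Import reals.
From mathcomp Require Import zify.
From Stdlib Require Import Lia.
Set Implicit Arguments. Unset Strict Implicit. Unset Printing Implicit Defensive.
Import Order.TTheory GRing.Theory Num.Theory.
Local Open Scope ring_scope.

Section Aux.
Variable R : realType.
Variables n d : nat.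

Definition emb (k : 'I_n) (B : 'M[R]_d.+1) : 'M[R]_(d + n) :=
  \matrix_(i, j)
    match act_idx k i, act_idx k j with
    | Some a, Some b => B a b
    | _, _ => (i == j)%:R
    end.

Definition psin (k : 'I_n) (a : 'I_d.+1) : nat :=
  if a == ord0 then (k : nat) else (n + a).-1.

Lemma psin_lt k a : (psin k a < d + n)%N.
Proof.
rewrite /psin; case: a => [[|a] Ha] /=.
  by have := ltn_ord k; lia.
by rewrite addnS /=; lia.
Qed.

Definition psi k a : 'I_(d + n) := Ordinal (psin_lt k a).

Lemma act_psi k a : act_idx k (psi k a) = Some a.
Proof.
rewrite /act_idx /= /psin; case: a => [[|a] Ha] /=.
  by rewrite eqxx; congr Some; apply: val_inj.
rewrite addnS /=.
have -> : (n + a == k :> nat) = false by have := ltn_ord k; lia.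
rewrite leq_addr; congr Some; apply: val_inj => /=.
by rewrite addKn inordK.
Qed.

Lemma psi_inj k : injective (psi k).
Proof. by move=> a b e; have := act_psi k a; rewrite e act_psi => -[]. Qed.

Lemma act_idxP k i :
  act_idx k i = None \/ exists a, act_idx k i = Some a /\ i = psi k a.
Proof.
case E: (act_idx k i) => [a|]; last by left.
right; exists a; split => //.
apply: val_inj => /=; move: E; rewrite /act_idx /psin.
case: eqP => [-> [<-] //|ne]; case: leqP => // h [<-].
have hi := ltn_ord i.
rewrite (_ : inord _ == ord0 = false); last first.
  by apply/negbTE; apply/eqP => /(congr1 val) /=; rewrite inordK //; lia.
rewrite inordK /=; lia.
Qed.

Lemma psi_neq k a i : act_idx k i = None -> (psi k a == i) = false.
Proof. by move=> H; apply/negbTE/eqP => e; move: H; rewrite -e act_psi. Qed.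

Lemma sum_act k (F : 'I_(d + n) -> R) :
  (forall i, act_idx k i = None -> F i = 0) -> \sum_i F i = \sum_a F (psi k a).
Proof.
move=> H.
rewrite (bigID (fun i => act_idx k i != None)) /= [X in _ + X]big1 ?addr0; last first.
  by move=> i /negPn /eqP; apply: H.
rewrite (reindex_omap (psi k) (act_idx k)); last first.
  move=> i; case: (act_idxP k i) => [->|[a [-> ->]]] //.
by apply: eq_bigl => a; rewrite act_psi eqxx.
Qed.

Lemma emb_mul_out k B p (N : 'M[R]_(d + n, p)) i j :
  act_idx k i = None -> (emb k B *m N) i j = N i j.
Proof.
move=> Hi; rewrite !mxE (bigD1 i) //= !mxE Hi eqxx mul1r big1 ?addr0 //.
by move=> l hl; rewrite !mxE Hi eq_sym (negbTE hl) mul0r.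
Qed.

Lemma emb_mul_in k B p (N : 'M[R]_(d + n, p)) a j :
  (emb k B *m N) (psi k a) j = \sum_b B a b * N (psi k b) j.
Proof.
rewrite !mxE (@sum_act k); last by move=> l Hl; rewrite !mxE act_psi Hl psi_neq // mul0r.
by apply: eq_bigr => b _; rewrite !mxE !act_psi.
Qed.

Lemma emb_mul k B C : emb k B *m emb k C = emb k (B *m C).
Proof.
apply/matrixP => i j; case: (act_idxP k i) => [Hi|[a [Hi ->]]].
  by rewrite emb_mul_out // !mxE Hi.
rewrite emb_mul_in !mxE act_psi; case: (act_idxP k j) => [Hj|[c [Hj ->]]].
  by rewrite Hj psi_neq // big1 // => b _; rewrite !mxE act_psi Hj psi_neq // mulr0.
by rewrite act_psi mxE; apply: eq_bigr => b _; rewrite mxE !act_psi.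
Qed.

Lemma emb_tr k B : (emb k B)^T = emb k B^T.
Proof.
apply/matrixP => i j; rewrite !mxE.
by case: (act_idx k i); case: (act_idx k j) => *; rewrite ?mxE // eq_sym.
Qed.

Lemma emb1 k : emb k 1%:M = 1%:M.
Proof.
apply/matrixP => i j; rewrite !mxE.
case: (act_idxP k i) => [->|[a [-> ->]]] //.
case: (act_idxP k j) => [->|[b [-> ->]]] //.
by rewrite mxE (inj_eq (@psi_inj k)).
Qed.

Lemma emb_orth k B : B^T *m B = 1%:M -> (emb k B)^T *m emb k B = 1%:M.
Proof. by move=> H; rewrite emb_tr emb_mul H emb1. Qed.

Lemma emb_orth' k B : B^T *m B = 1%:M -> emb k B *m (emb k B)^T = 1%:M.
Proof. by move=> H; apply: mulmx1C; apply: emb_orth. Qed.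

Lemma emb_col_out k B p (N : 'M[R]_(d + n, p)) j t :
  act_idx k t = None -> (forall i, N i j = (i == t)%:R) ->
  forall i, (emb k B *m N) i j = (i == t)%:R.
Proof.
move=> Ht HN i; case: (act_idxP k i) => [Hi|[a [Hi ->]]].
  by rewrite emb_mul_out.
rewrite emb_mul_in psi_neq // big1 // => b _.
by rewrite HN psi_neq // mulr0.
Qed.

Lemma psi0 k : psi k ord0 = widen_ord (leq_addl d n) k.
Proof. by apply: val_inj; rewrite /= /psin eqxx. Qed.

Lemma psi_eqk k b : ((psi k b : nat) == k) = (b == ord0).
Proof.
rewrite /= /psin -[b == ord0](inj_eq val_inj) /=; case: b => [[|b] Hb] /=; first by rewrite eqxx.
by rewrite addnS /=; have := ltn_ord k; lia.
Qed.

Lemma emb_col_k (k : 'I_n) (B : 'M[R]_d.+1) p (N : 'M[R]_(d + n, p)) j :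
  (forall i, N i j = ((i : nat) == k)%:R) ->
  forall a, (emb k B *m N) (psi k a) j = B a 0.
Proof.
move=> HN a; rewrite emb_mul_in (bigD1 ord0) //= HN psi_eqk eqxx mulr1 big1 ?addr0 //.
by move=> b hb; rewrite HN psi_eqk (negbTE hb) mulr0.
Qed.

Lemma act_None (k : 'I_n) (i : 'I_(d + n)) : act_idx k i = None -> ((i : nat) < n)%N /\ (i : nat) != k.
Proof.
rewrite /act_idx; case: eqP => // ne; case: leqP => // h _; split => //.
Qed.

Lemma act_top (k : 'I_n) (t : 'I_(d + n)) : ((t : nat) < n)%N -> (t : nat) != k -> act_idx k t = None.
Proof. by move=> h1 h2; rewrite /act_idx (negbTE h2) leqNgt h1. Qed.

Lemma sum_deltaw (i : 'I_n) (F : 'I_(d + n) -> R) :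
  \sum_(l : 'I_(d + n)) ((l : nat) == i)%:R * F l = F (widen_ord (leq_addl d n) i).
Proof.
rewrite (bigD1 (widen_ord (leq_addl d n) i)) //= eqxx mul1r big1 ?addr0 // => l hl.
rewrite (_ : (l == i :> nat) = false) ?mul0r //; apply/negbTE; apply: contra hl => /eqP e.
by apply/eqP/val_inj.
Qed.

End Aux.

Section Main.
Variable R : realType.
Variables n d : nat.
Variable Qt : 'rV[R]_d -> 'M[R]_d.+1.
Variable Theta : 'rV[R]_d -> Prop.
Hypothesis HQ : forall th, Theta th -> (Qt th)^T *m Qt th = 1%:M.

Notation TI := (@topId R n d).

Definition Pm (ths : {ffun 'I_n -> 'rV[R]_d}) m : 'M[R]_(d + n) :=
  foldl (fun M k0 => embedQ Qt k0 (ths k0) *m M) 1%:M (take m (enum 'I_n)).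

Lemma Pm0 ths : Pm ths 0 = 1%:M.
Proof. by rewrite /Pm take0. Qed.

Lemma PmS ths m (Hm : (m < n)%N) :
  Pm ths m.+1 = emb (Ordinal Hm) (Qt (ths (Ordinal Hm))) *m Pm ths m.
Proof.
rewrite /Pm (take_nth (Ordinal Hm)) ?size_enum_ord // foldl_rcons.
by rewrite (nth_ord_enum (Ordinal Hm) (Ordinal Hm)).
Qed.

Lemma Phi_Pm ths : Phi Qt ths = Pm ths n *m TI.
Proof. by rewrite /Phi /Pm take_oversize // size_enum_ord. Qed.

Lemma Pm_ext (ths ths' : {ffun 'I_n -> 'rV[R]_d}) m : (m <= n)%N ->
  (forall k : 'I_n, (k < m)%N -> ths k = ths' k) -> Pm ths m = Pm ths' m.
Proof.
elim: m => [|m IH] hm H; first by rewrite !Pm0.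
rewrite !(PmS _ hm) H // IH // => [|k hk]; first exact: ltnW.
by apply: H; exact: ltnW.
Qed.

Definition orthN (N : 'M[R]_(d + n, n)) := N^T *m N = 1%:M.
Definition lowN (N : 'M[R]_(d + n, n)) :=
  forall (i : 'I_(d + n)) (j : 'I_n), ((i : nat) < j)%N -> N i j = 0.
Definition colE m (N : 'M[R]_(d + n, n)) :=
  forall j : 'I_n, (m <= j)%N -> forall i : 'I_(d + n), N i j = ((i : nat) == j)%:R.

Notation wid := (widen_ord (leq_addl d n)).

Lemma rowE0 m N : orthN N -> colE m N ->
  forall i j : 'I_n, (m <= i)%N -> i != j -> N (wid i) j = 0.
Proof.
move=> Ho Hc i j hi hij; have := congr1 (fun M : 'M[R]_n => M i j) Ho; rewrite !mxE /=.
under eq_bigr => l _ do rewrite mxE Hc //.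
by rewrite sum_deltaw (negbTE hij).
Qed.

Lemma colE_wid m N (j : 'I_n) : colE m N -> (m <= j)%N ->
  forall i, N i j = (i == wid j)%:R.
Proof. by move=> Hc hj i; rewrite Hc. Qed.

Lemma topId_orth : orthN (TI).
Proof.
apply/matrixP => i j; rewrite !mxE.
under eq_bigr => l _ do rewrite !mxE.
by rewrite sum_deltaw.
Qed.

Lemma fwd (ths : {ffun 'I_n -> 'rV[R]_d}) m : (m <= n)%N -> (forall k : 'I_n, (k < m)%N -> Theta (ths k)) ->
  let N := Pm ths m *m TI in
  [/\ orthN N, lowN N, colE m N &
      forall j : 'I_n, (j < m)%N -> N (wid j) j = mu Qt (ths j)].
Proof.
elim: m => [|m IH] hm HT /=.
  rewrite Pm0 mul1mx; split => //.
  - exact: topId_orth.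
  - by move=> i j hij; rewrite mxE; case: eqP => // e; move: hij; rewrite e ltnn.
  - by move=> j _ i; rewrite mxE.
have hm' : (m <= n)%N by exact: ltnW.
have [|Ho Hl Hc Hd] := IH hm'; first by move=> k hk; apply: HT; exact: ltnW.
set k := Ordinal hm.
set N := Pm ths m *m TI.
have Hk : Theta (ths k) by apply: HT.
rewrite PmS -mulmxA -/N.
have HcS : colE m.+1 (emb k (Qt (ths k)) *m N).
  move=> j hj i; apply: (@emb_col_out R n d k _ _ N j (wid j)).
  - by apply: act_top => //=; rewrite neq_ltn hj orbT.
  - by move=> i'; rewrite Hc //; exact: ltnW.
split => //.
- rewrite /orthN trmx_mul -mulmxA [X in _ *m X]mulmxA emb_orth ?(mul1mx N) //; exact: HQ.
- move=> i j hij; case: (leqP j m) => hjm; last first.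
    by rewrite HcS //; case: eqP => // e; move: hij; rewrite e ltnn.
  rewrite emb_mul_out ?Hl //; apply: act_top => /=; first by lia.
  by rewrite neq_ltn; apply/orP; left; lia.
- move=> j hj; case: (ltnP j m) => hjm.
    rewrite emb_mul_out ?Hd //; apply: act_top => //=.
    by rewrite neq_ltn hjm.
  have ejk : j = k by apply: val_inj => /=; lia.
  rewrite ejk -psi0 (emb_col_k (k := k)) //.
  by move=> i; rewrite Hc.
Qed.


Hypothesis Huniq : forall h : 'cV[R]_d.+1, h != 0 ->
  exists! th, Theta th /\ (Qt th)^T *m h = vnorm h *: delta_mx ord0 0.

Lemma act_None_wid (k : 'I_n) i : act_idx k i = None ->
  exists i' : 'I_n, i = wid i' /\ (i' : nat) != k.
Proof.
move=> /act_None [h1 h2]; exists (Ordinal h1); split => //.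
by apply: val_inj.
Qed.

Lemma surj m : (m <= n)%N -> forall N, orthN N -> lowN N -> colE m N ->
  (forall j : 'I_n, (j < m)%N -> N (wid j) j != 0) ->
  exists ths : {ffun 'I_n -> 'rV[R]_d},
    (forall k : 'I_n, (k < m)%N -> Theta (ths k) /\ mu Qt (ths k) = N (wid k) k) /\
    Pm ths m *m TI = N.
Proof.
elim: m => [|m IH] hm N Ho Hl Hc Hd.
  exists [ffun _ => 0]; split => //.
  rewrite Pm0 mul1mx; apply/matrixP => i j; rewrite mxE Hc //.
have hm' : (m <= n)%N by exact: ltnW.
set k := Ordinal hm.
have Nk0 : forall i, act_idx k i = None -> N i k = 0.
  move=> i /act_None_wid [i' [-> hi']].
  case: (ltnP i' k) => hik; first by apply: Hl.
  apply: (rowE0 Ho Hc) => //=; by rewrite ltn_neqAle eq_sym hi' hik.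
set h : 'cV[R]_d.+1 := \col_a N (psi k a) k.
have hsum : \sum_a h a 0 ^+ 2 = 1.
  have := congr1 (fun M : 'M[R]_n => M k k) Ho; rewrite !mxE eqxx mulr1n => <-.
  rewrite (@sum_act _ _ _ k); last by move=> i Hi; rewrite mxE Nk0 // mul0r.
  by apply: eq_bigr => a _; rewrite !mxE expr2.
have hnorm : vnorm h = 1 by rewrite /vnorm hsum sqrtr1.
have hnz : h != 0.
  apply/eqP => /(congr1 (fun M : 'cV[R]_d.+1 => M ord0 0)); rewrite !mxE psi0.
  by apply/eqP; apply: Hd.
have [th [[Tth Hth] _]] := Huniq hnz.
set Q := Qt th.
have HQQ : Q^T *m Q = 1%:M by exact: HQ.
have HQQ' : Q *m Q^T = 1%:M by exact: mulmx1C.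
have hQ : forall a, N (psi k a) k = Q a 0.
  move=> a; have : h = Q *m delta_mx ord0 0.
    by rewrite -[LHS]mul1mx -HQQ' -mulmxA Hth hnorm scale1r.
  by rewrite -matrix.colE => /(congr1 (fun M : 'cV[R]_d.+1 => M a 0)); rewrite !mxE.
set N' := emb k Q^T *m N.
have HN'c : colE m N'.
  move=> j hj i; case: (ltnP m j) => hmj.
    apply: (@emb_col_out R n d k _ _ N j (wid j)) => [|i']; last first.
      by rewrite Hc.
    by apply: act_top => //=; rewrite neq_ltn hmj orbT.
  have ejk : j = k by apply: val_inj => /=; lia.
  rewrite ejk; case: (act_idxP k i) => [Hi|[a [Hi ->]]].
    rewrite emb_mul_out // Nk0 //; have [_ /negbTE ->] := act_None Hi; done.
  rewrite emb_mul_in psi_eqk.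
  under eq_bigr => b _ do rewrite mxE hQ.
  have := congr1 (fun M : 'M[R]_d.+1 => M a ord0) HQQ; rewrite [RHS]mxE => <-.
  by rewrite mxE; apply: eq_bigr => b _; rewrite mxE.
have [||||ths' [H1 H2]] := IH hm' N'.
- rewrite /orthN trmx_mul emb_tr trmxK /N' mulmxA -[N^T *m _ *m _]mulmxA emb_mul HQQ' emb1 (mulmx1 N^T); exact: Ho.
- move=> i j hij; case: (leqP j m) => hjm; last first.
    by rewrite HN'c ?(ltnW hjm) //; case: eqP => // e; move: hij; rewrite e ltnn.
  rewrite emb_mul_out ?Hl //; apply: act_top => /=; first by lia.
  by rewrite neq_ltn; apply/orP; left; lia.
- exact: HN'c.
- move=> j hj; rewrite emb_mul_out ?Hd //; first exact: ltnW.
  by apply: act_top => //=; rewrite neq_ltn hj.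
exists [ffun i => if i == k then th else ths' i]; split.
  move=> k' hk'; rewrite ffunE; case: eqP => [->|ne].
    by split => //; rewrite /mu -/Q -hQ psi0.
  have hk'm : (k' < m)%N.
    by rewrite ltn_neqAle -ltnS hk' andbT; apply: contra_not_neq ne => e; apply: val_inj.
  have [T1 T2] := H1 _ hk'm; split => //; rewrite T2 emb_mul_out //.
  by apply: act_top => //=; rewrite neq_ltn hk'm.
rewrite PmS ffunE eqxx -/Q.
rewrite (@Pm_ext _ ths') //; last first.
  move=> i hi; rewrite ffunE ifF //; apply/negbTE; rewrite neq_ltn; apply/orP; left; exact: hi.
by rewrite -mulmxA H2 /N' mulmxA emb_mul HQQ' emb1 mul1mx.
Qed.

Lemma vnorm_col0 (Q : 'M[R]_d.+1) : Q^T *m Q = 1%:M -> vnorm (col ord0 Q) = 1.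
Proof.
move=> H; rewrite /vnorm -[RHS]sqrtr1; congr Num.sqrt.
have := congr1 (fun M : 'M[R]_d.+1 => M ord0 ord0) H; rewrite [RHS]mxE eqxx mulr1n => <-.
by rewrite mxE; apply: eq_bigr => b _; rewrite !mxE expr2.
Qed.

Lemma inj m : (m <= n)%N -> forall ths ths' : {ffun 'I_n -> 'rV[R]_d},
  (forall k : 'I_n, (k < m)%N -> Theta (ths k) /\ Theta (ths' k)) ->
  Pm ths m *m TI = Pm ths' m *m TI -> forall k : 'I_n, (k < m)%N -> ths k = ths' k.
Proof.
elim: m => [|m IH] hm ths ths' HT Heq k0 hk0 //.
have hm' : (m <= n)%N by exact: ltnW.
set k := Ordinal hm.
have [|_ _ Hc _] := fwd (ths:=ths) hm'; first by move=> k' hk'; have [] := HT k' (ltnW hk').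
have [|_ _ Hc' _] := fwd (ths:=ths') hm'; first by move=> k' hk'; have [] := HT k' (ltnW hk').
have [T1 T2] := HT k (ltnSn m).
move: Heq; rewrite !PmS -!mulmxA => Heq.
set Q := Qt (ths k) in Heq; set Q' := Qt (ths' k) in Heq.
have HQQ : Q^T *m Q = 1%:M by exact: HQ.
have HQQ' : Q'^T *m Q' = 1%:M by exact: HQ.
have ecol : col ord0 Q = col ord0 Q'.
  apply/matrixP => a j; rewrite !mxE.
  have := congr1 (fun M : 'M[R]_(d + n, n) => M (psi k a) k) Heq.
  by rewrite !(@emb_col_k _ _ _ k) // => i; rewrite (Hc, Hc').
have hP : forall (B : 'M[R]_d.+1), B^T *m B = 1%:M ->
    B^T *m col ord0 B = vnorm (col ord0 B) *: delta_mx ord0 0.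
  by move=> B HB; rewrite vnorm_col0 // scale1r matrix.colE mulmxA HB mul1mx.
have hnz : col ord0 Q != 0.
  apply/eqP => e; have := vnorm_col0 HQQ; rewrite e /vnorm big1 ?sqrtr0.
    by move/eqP; rewrite eq_sym oner_eq0.
  by move=> i _; rewrite mxE expr0n.
have eth : ths k = ths' k.
  have [t [_ Ut]] := Huniq hnz.
  rewrite -(Ut (ths k)); last by split => //; apply: hP.
  rewrite -(Ut (ths' k)) //; split => //; rewrite ecol; apply: hP; exact: HQQ'.
have eN : Pm ths m *m TI = Pm ths' m *m TI.
  rewrite -[LHS]mul1mx -[RHS]mul1mx -(emb_orth k HQQ) -!mulmxA Heq /Q' -eth.
  by [].
case: (ltnP k0 m) => hk0m.
  by apply: (IH hm' ths ths') => // k' hk'; apply: HT; exact: ltnW.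
have -> : k0 = k by apply: val_inj => /=; lia.
exact: eth.
Qed.

Lemma stack_orth (A : 'M[R]_n) (C : 'M[R]_(d, n)) :
  (stack A C)^T *m stack A C = C^T *m C + A^T *m A.
Proof. by rewrite /stack tr_col_mx mul_row_col. Qed.

Lemma main_bij (P : R -> Prop) : (forall x, P x -> x != 0) ->
  bij_onto Theta Qt P (fun (A : 'M[R]_n) (C : 'M[R]_(d, n)) => OTSON A C /\ forall i, P (diagQ A C i)).
Proof.
move=> HP; rewrite /bij_onto; split; [|split].
- move=> ths Hdom.
  have [|Ho Hl _ Hd] := fwd (ths:=ths) (leqnn n).
    by move=> k _; have [] := Hdom k.
  exists (dsubmx (Phi Qt ths)), (usubmx (Phi Qt ths)).
  set A := dsubmx _; set C := usubmx _.
  have eS : Phi Qt ths = stack A C by rewrite /stack vsubmxK.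
  split => //; split; first split.
  + have := Ho; rewrite /orthN -Phi_Pm eS stack_orth => <-.
    by rewrite addrC addKr.
  + by move=> i j hij; rewrite -eS Phi_Pm Hl.
  + move=> i; rewrite /diagQ -eS Phi_Pm Hd //.
    by have [] := Hdom i.
- move=> ths ths' H1 H2; rewrite !Phi_Pm => e.
  apply/ffunP => k; apply: (inj (leqnn n) (ths:=ths) (ths':=ths')) => //.
  by move=> k' _; have [? _] := H1 k'; have [? _] := H2 k'.
- move=> A C [[Horth Hlow] Hdg].
  have [||||ths [H1 H2]] := surj (leqnn n) (N := stack A C).
  + by rewrite /orthN stack_orth Horth addrC subrK.
  + by move=> i j hij; apply: Hlow.
  + by move=> j hj; rewrite leqNgt ltn_ord in hj.
  + by move=> j _; apply: HP; apply: Hdg.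
  exists ths; split; last by rewrite Phi_Pm.
  by move=> k; have [T E] := H1 k (ltn_ord k); split => //; rewrite E; apply: Hdg.
Qed.
End Main.

Theorem theorem6p4 (R : realType) (n d : nat)
    (Theta : 'rV[R]_d -> Prop) (Qt : 'rV[R]_d -> 'M[R]_d.+1) :
  (1 <= d)%N -> (d <= n)%N ->
  ORP ord0 Theta Qt ->
  bij_onto Theta Qt (fun m => 0 < m) (@strict_OTSON R n d) /\
  bij_onto Theta Qt (fun m => m != 0) (@unreduced_OTSON R n d).
Proof.
move=> _ _ [HQ Hu]; split.
- apply: (@main_bij R n d Qt Theta HQ Hu (fun m => 0 < m)).
  by move=> x hx; rewrite gt_eqF.
- exact: (@main_bij R n d Qt Theta HQ Hu (fun m => m != 0)).
Qed.
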